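(* Let $\delta\ge1$ be an integer. Under the AMC policy, for every characteristic function $v\in V_\delta$ and every arrival order $\pi$, the coalition structure $C_g$ formed by greedy players satisfies $|S|\le\delta$ for every $S\in C_g$.
   Context: Players: a finite set $N=\{a_1,\dots,a_n\}$. A characteristic function is $v:2^N\to\mathbb{R}_{\ge 0}$ with $v(\emptyset)=0$. There are fixed constants $0<\mathsf{min}\le\mathsf{max}$ and $v$ is monotone and bounded: $\mathsf{min}\le v(S)\le v(T)\le\mathsf{max}$ for all nonempty $S\subseteq T\subseteq N$. $V_\delta$ is the set of such $v$ with $\delta\cdot\mathsf{min}\le\mathsf{max}<(\delta+1)\cdot\mathsf{min}$. Online process: an arrival order is a permutation $\pi=(\pi_1,\dots,\pi_n)$ of $N$; player $\pi_t$ arrives at time $t$; $\pi_{\prec t}$ is the set of players arriving before time $t$ and $\pi^{-1}(i)$ the arrival time of $i$. For $S\subseteq N$, $\pi_{|S}$ denotes the players of $S$ in the relative order of $\pi$. Let $C^{t-1}$ be the coalition structure of players arrived before time $t$ ($C^0=\emptyset$). At time $t$, player $\pi_t$ either joins an existing coalition $S\in C^{t-1}$ or forms $\{\pi_t\}$ (choice $S=\emptyset$); decisions are never revised. AMC policy: for a coalition $S$ and $i\in S$, $\varphi_i(S,\pi_{|S})=v((\pi_{\prec\pi^{-1}(i)}\cap S)\cup\{i\})-v(\pi_{\prec\pi^{-1}(i)}\cap S)$. Greedy players: $\pi_t$ chooses $S\in C^{t-1}\cup\{\emptyset\}$ maximizing $\varphi_{\pi_t}(S\cup\{\pi_t\},\pi_{|S\cup\{\pi_t\}})$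 (predetermined tie-breaking); $C_g$ is the final structure after all $n$ arrivals. *)

(* Defs.v *)
From HB Require Import structures.
From mathcomp Require Import all_boot all_order all_algebra.
Set Implicit Arguments. Unset Strict Implicit. Unset Printing Implicit Defensive.
Import Order.TTheory GRing.Theory Num.Theory.
Local Open Scope ring_scope.

Definition in_V (R : realFieldType) (T : finType) (mn mx : R) (delta : nat)
    (v : {set T} -> R) : Prop :=
  [/\ v set0 = 0, 0 < mn, mn <= mx,
      (forall S U : {set T}, S != set0 -> S \subset U ->
          mn <= v S /\ v S <= v U /\ v U <= mx)
    & delta%:R * mn <= mx /\ mx < delta.+1%:R * mn].

Definition arrived_before (T : finType) (s : seq T) (i : T) : {set T} :=
  [set x in take (index i s) s].

Definition amc (R : realFieldType) (T : finType) (v : {set T} -> R)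
    (s : seq T) (S : {set T}) (i : T) : R :=
  v ((arrived_before s i :&: S) :|: [set i]) - v (arrived_before s i :&: S).

(* greedy_run v s C : C is a coalition structure that can result from greedy
   players arriving in order s (s a prefix of the arrival order), where every
   arriving player picks an option (existing coalition, or a new singleton)
   maximising its AMC share; ties may be broken in any way, so every
   predetermined tie-breaking rule yields such a run. *)
Inductive greedy_run (R : realFieldType) (T : finType) (v : {set T} -> R)
  : seq T -> {set {set T}} -> Prop :=
| greedy_nil : greedy_run v [::] set0
| greedy_new (s : seq T) (C : {set {set T}}) (p : T) :
    greedy_run v s C ->
    (forall S', S' \in C ->
        amc v (rcons s p) (S' :|: [set p]) p <= amc v (rcons s p) [set p] p) ->
    greedy_run v (rcons s p) ([set p] |: C)
| greedy_join (s : seq T) (C : {set {set T}}) (p : T) (S : {set T}) :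
    greedy_run v s C ->
    S \in C ->
    amc v (rcons s p) [set p] p <= amc v (rcons s p) (S :|: [set p]) p ->
    (forall S', S' \in C ->
        amc v (rcons s p) (S' :|: [set p]) p <= amc v (rcons s p) (S :|: [set p]) p) ->
    greedy_run v (rcons s p) ((S :|: [set p]) |: (C :\ S)).

(* Main.v *)
Require Import Defs.
From HB Require Import structures.
From mathcomp Require Import all_boot all_order all_algebra.
Import Order.TTheory GRing.Theory Num.Theory.
Local Open Scope ring_scope.

Lemma ab_rcons (T : finType) (s : seq T) (p : T) :
  p \notin s -> arrived_before (rcons s p) p = [set x in s].
Proof.
move=> ps; rewrite /arrived_before -cats1 index_cat (negbTE ps) /= eqxx addn0.
by rewrite take_size_cat.
Qed.

Lemma inv (R : realFieldType) (T : finType) (mn mx : R) (delta : nat)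
    (v : {set T} -> R) (s : seq T) (C : {set {set T}}) :
  in_V mn mx delta v -> greedy_run v s C -> uniq s ->
  forall S, S \in C -> [/\ S != set0, S \subset [set x in s] & #|S|%:R * mn <= v S].
Proof.
case=> v0 mn0 mnmx hv hd.
elim=> [|s0 C0 p run IH Hmax|s0 C0 p S0 run IH S0C Hge Hmax].
- by move=> _ S; rewrite in_set0.
- rewrite rcons_uniq => /andP[ps us] S; rewrite in_setU1 => /orP[/eqP->|SC].
  + split; first by apply/set0Pn; exists p; rewrite in_set1.
    * by apply/subsetP=> x; rewrite in_set1 => /eqP->; rewrite inE mem_rcons mem_head.
    * rewrite cards1 mul1r; have [] := hv [set p] [set p] _ (subxx _) => //.
      by apply/set0Pn; exists p; rewrite in_set1.
  + have [A B D] := IH us S SC; split => //.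
    apply: subset_trans B _; apply/subsetP=> x; rewrite !inE mem_rcons inE => ->.
    by rewrite orbT.
- rewrite rcons_uniq => /andP[ps us] S; rewrite in_setU1 => /orP[/eqP->|].
  + have [A B D] := IH us S0 S0C.
    have pS0 : p \notin S0.
      by apply/negP=> /(subsetP B); rewrite inE (negbTE ps).
    split.
    * by apply/set0Pn; exists p; rewrite !inE eqxx orbT.
    * apply/subsetP=> x; rewrite !inE mem_rcons inE => /orP[/(subsetP B)|->].
        by rewrite inE => ->; rewrite orbT.
      by [].
    * move: Hge; rewrite /amc ab_rcons //.
      have -> : [set x in s0] :&: [set p] = set0.
        apply/setP=> x; rewrite !inE; apply/negP=> /andP[xs /eqP xp].
        by move: ps; rewrite -xp xs.
      have -> : [set x in s0] :&: (S0 :|: [set p]) = S0.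
        apply/setP=> x; rewrite !inE; apply/idP/idP.
          case/andP=> xs /orP[//|/eqP xp]; by move: ps; rewrite -xp xs.
        by move=> xS; rewrite xS andbT; move: (subsetP B x xS); rewrite inE.
      rewrite set0U v0 subr0 => H.
      have np : [set p] != set0 by apply/set0Pn; exists p; rewrite in_set1.
      have [h1 _] := hv [set p] [set p] np (subxx _).
      rewrite setUC cardsU1 pS0 /= add1n -addn1 natrD mulrDl mul1r.
      have : v [set p] + v S0 <= v ([set p] :|: S0) by rewrite setUC -lerBrDr.
      move=> H2; apply: le_trans H2; rewrite addrC; exact: lerD.
  + rewrite in_setD1 => /andP[_ SC].
    have [A B D] := IH us S SC; split => //.
    apply: subset_trans B _; apply/subsetP=> x; rewrite !inE mem_rcons inE => ->.
    by rewrite orbT.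
Qed.

Theorem lemma2 (R : realFieldType) (T : finType) (mn mx : R) (delta : nat)
    (v : {set T} -> R) (pi : seq T) (Cg : {set {set T}}) :
  (1 <= delta)%N ->
  in_V mn mx delta v ->
  perm_eq pi (enum T) ->
  greedy_run v pi Cg ->
  forall S : {set T}, S \in Cg -> (#|S| <= delta)%N.
Proof.
move=> _ hV hp run S SC.
have us : uniq pi by rewrite (perm_uniq hp) enum_uniq.
have [A B D] := @inv R T mn mx delta v pi Cg hV run us S SC.
case: hV => v0 mn0 mnmx hv [_ hd].
have [_ [_ h3]] := hv S S A (subxx _).
have : #|S|%:R * mn < delta.+1%:R * mn by apply: le_lt_trans D (le_lt_trans h3 hd).
by rewrite ltr_pM2r // ltr_nat ltnS.
Qed.
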